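(* Let $X=\mathbb L_{\geq0}$ or $X=\mathbb L$. Then $\operatorname{Homeo}_{cpt}(X)$, equipped with the compact-open topology (as maps of $X$), is countably tight.
   Context: The Closed Long Ray $\mathbb L_{\geq0}$ is $\omega_1\times[0,1)$ with the order topology of the lexicographic order; the Long Line $\mathbb L$ is obtained by gluing a copy of $\mathbb L_{\geq0}$ with reversed order and a copy with the usual order at their least points $(0,0)$. $\operatorname{Homeo}_{cpt}(X)$ is the group of homeomorphisms $h$ of $X$ with compact support $\operatorname{cl}_X\{x\mid h(x)\neq x\}$. A space is countably tight if whenever $p\in\operatorname{cl}A$ there is a countable $C\subseteq A$ with $p\in\operatorname{cl}C$. *)

(* Defs.v *)
From HB Require Import structures.
From mathcomp Require Import all_boot all_order all_algebra.
From mathcomp Require Import all_classical all_reals.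
From mathcomp Require Import topology_theory.topology topology_theory.order_topology
  topology_theory.function_spaces topology_theory.compact.
Set Implicit Arguments. Unset Strict Implicit. Unset Printing Implicit Defensive.
Import Order.TTheory GRing.Theory Num.Theory.
Local Open Scope classical_set_scope.
Local Open Scope ring_scope.

Fact unit_disp : Order.disp_t. Proof. exact: Order.Disp tt tt. Qed.

Section LongLines.
Context {R : realType}.

Definition in01 (x : R) : bool := (0 <= x) && (x < 1).
Definition I01 := {x : R | in01 x}.
HB.instance Definition _ := [isSub for (@sval R in01) : I01 -> R].
HB.instance Definition _ := [Choice of I01 by <:].
HB.instance Definition _ := [SubChoice_isSubOrder of I01 by <: with unit_disp].

Context {d : Order.disp_t} {W : orderType d}.

Definition LongRay_ord := (W *l I01)%type.

Definition lr_minimal (x : LongRay_ord) : bool :=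
  `[< forall y : LongRay_ord, (x <= y)%O >].

(* long line (as a linearly ordered set): a reversed copy of the long ray
   followed by a copy of the long ray, glued at their least point.
   Encoded inside  bool *l (LongRay_ord^d *l LongRay_ord):
   - (false, (x, m)) with m least, x not least   stands for  "-x"
     (ordered by the reversed order of x);
   - (true, (m, x)) with m least                stands for  "+x"
   (the common least point 0 is represented only on the [true] side). *)
Definition LL_pred (p : (bool *l (LongRay_ord^d *l LongRay_ord))%type) : bool :=
  if p.1 then lr_minimal p.2.1
  else lr_minimal p.2.2 && ~~ lr_minimal p.2.1.
Definition LongLine_ord := {p : (bool *l (LongRay_ord^d *l LongRay_ord))%type | LL_pred p}.
HB.instance Definition _ := [isSub for (@sval _ LL_pred) : LongLine_ord -> _].
HB.instance Definition _ := [Choice of LongLine_ord by <:].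
HB.instance Definition _ := [SubChoice_isSubOrder of LongLine_ord by <: with unit_disp].

End LongLines.

Definition LongRay (R : realType) d (W : orderType d) :=
  order_topology (@LongRay_ord R d W).
Definition LongLine (R : realType) d (W : orderType d) :=
  order_topology (@LongLine_ord R d W).

Definition is_omega1 d (W : orderType d) : Prop :=
  [/\ well_founded (fun x y : W => (x < y)%O),
      ~ countable [set: W] &
      forall w : W, countable [set v : W | (v < w)%O] ].

Definition homeomorphism (X : topologicalType) (f : X -> X) : Prop :=
  exists g : X -> X, [/\ cancel f g, cancel g f, continuous f & continuous g].

Definition Homeo_cpt (X : topologicalType) : set {compact-open, X -> X} :=
  [set f | homeomorphism f /\ compact (closure [set x | f x != x])].

(* countable tightness of a subspace S of a topological space T
   (closure in the subspace S is closure in T intersected with S) *)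
Definition countably_tight_subspace (T : topologicalType) (S : set T) : Prop :=
  forall (A : set T) (p : T), A `<=` S -> S p -> closure A p ->
    exists2 C : set T, [/\ C `<=` A & countable C] & closure C p.

(* Main.v *)
Require Import Defs.
From HB Require Import structures.
From mathcomp Require Import all_boot all_order all_algebra.
From mathcomp Require Import all_classical all_reals.
From mathcomp Require Import topology_theory.topology topology_theory.order_topology
  topology_theory.function_spaces topology_theory.compact.
Set Implicit Arguments. Unset Strict Implicit. Unset Printing Implicit Defensive.
Import Order.TTheory GRing.Theory Num.Theory.
Local Open Scope classical_set_scope.
Local Open Scope order_scope.

Section Generic.
Context {dX : Order.disp_t} {X : orderTopologicalType dX}.

Lemma itv_convex (i : interval X) (u v w : X) :
  u <= v -> v <= w -> u \in i -> w \in i -> v \in i.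
Proof.
case: i => bl br; rewrite !itv_boundlr => uv vw /andP[lu _] /andP[_ wr].
rewrite (le_trans lu) /=; last by rewrite bnd_simp.
by rewrite (le_trans _ wr) // bnd_simp.
Qed.

Lemma open_convex_nbhs (G : set X) (y : X) : open G -> G y ->
  exists V : set X, [/\ open V, V y, V `<=` G &
     forall u v w, u <= v -> v <= w -> V u -> V w -> V v].
Proof.
move=> oG Gy; have : nbhs y G by exact: open_nbhs_nbhs.
rewrite itv_nbhsE => -[i [oi yi] iG].
exists [set` i]; split => //; first exact: itv_open_ends_open.
by move=> u v w uv vw /= ui wi; exact: (itv_convex uv vw).
Qed.

End Generic.

Section CompactInduct.
Context {Y : topologicalType}.

Lemma compact_induct (K : set Y) (F : set (set Y)) : compact K -> F set0 ->
  (forall A B, F A -> F B -> F (A `|` B)) ->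
  (forall A B, A `<=` B -> F B -> F A) ->
  (forall x, K x -> exists U, [/\ open U, U x & F U]) -> F K.
Proof.
move=> cK F0 FU Fsub loc; apply: contrapT => nFK.
pose G := filter_from F (fun A => K `\` A).
have GF : Filter G.
  apply: filter_from_filter; first by exists set0.
  move=> A B FA FB; exists (A `|` B); first exact: FU.
  by move=> z [Kz /not_orP [nA nB]].
have GP : ProperFilter G.
  apply: filter_from_proper => A FA; apply: contrapT => /set0P/negP.
  rewrite negbK => /eqP KA; apply: nFK; apply: (Fsub _ A) => // z Kz.
  by apply: contrapT => nAz; have : (K `\` A) z by []; rewrite KA.
have GK : G K by exists set0 => // z [].
have [x [Kx clx]] := cK G GP GK.
have [U [oU Ux FUx]] := loc x Kx.
have := clx (K `\` U) U; case.
- by exists U.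
- exact: open_nbhs_nbhs.
- by move=> z [[_ nUz] Uz].
Qed.

End CompactInduct.

Section Abstract.
Context {dX : Order.disp_t} {X : orderTopologicalType dX}.
Local Notation T := {compact-open, X -> X}.
Local Notation H := (@Homeo_cpt X).

Variables (I : Type) (R : I -> set X) (dd : I -> nat -> X) (ee : I -> nat -> set X).

Definition Ncond (c : I) (s : seq (nat * nat)) : set T :=
  [set g | forall ij, ij \in s -> ee c ij.2 (g (dd c ij.1))].

Lemma Ncond_cons c ij s (g : T) :
  Ncond c (ij :: s) g <-> ee c ij.2 (g (dd c ij.1)) /\ Ncond c s g.
Proof.
split=> [h|[h1 h2] kl]; first by split; [apply: h; rewrite inE eqxx|
  move=> kl kls; apply: h; rewrite inE kls orbT].
by rewrite inE => /orP[/eqP->//|]; exact: h2.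
Qed.

Lemma Ncond_cat c s1 s2 (g : T) :
  Ncond c (s1 ++ s2) g <-> Ncond c s1 g /\ Ncond c s2 g.
Proof.
split=> [h|[h1 h2] kl]; first by split => kl kls; apply: h; rewrite mem_cat kls ?orbT.
by rewrite mem_cat => /orP[]; [exact: h1|exact: h2].
Qed.

Definition leI (c c' : I) := [/\ R c `<=` R c',
  (forall i, exists i', dd c' i' = dd c i) &
  (forall j, exists j', ee c' j' = ee c j)].

Lemma leI_trans a b c : leI a b -> leI b c -> leI a c.
Proof.
move=> [ab1 ab2 ab3] [bc1 bc2 bc3]; split.
- by move=> x /ab1/bc1.
- by move=> i; have [i' <-] := ab2 i; have [i'' <-] := bc2 i'; exists i''.
- by move=> j; have [j' <-] := ab3 j; have [j'' <-] := bc3 j'; exists j''.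
Qed.

Lemma leI_transl c c' s : leI c c' ->
  exists s', forall g : T, Ncond c' s' g <-> Ncond c s g.
Proof.
move=> [_ h2 h3]; elim: s => [|[i j] s [s' IH]].
  by exists [::] => g; split => _ ?; rewrite in_nil.
have [i' ei] := h2 i; have [j' ej] := h3 j.
exists ((i', j') :: s') => g; rewrite !Ncond_cons /= ei ej IH; done.
Qed.

Lemma Ncond_open c s : (forall j, open (ee c j)) -> open (Ncond c s).
Proof.
move=> oe; elim: s => [|[i j] s IH].
  have -> : Ncond c [::] = setT.
    by apply/seteqP; split => // g _ ij; rewrite in_nil.
  exact: openT.
have -> : Ncond c ((i, j) :: s) =
   [set g : T | [set g x | x in [set dd c i]] `<=` ee c j] `&` Ncond c s.
  apply/seteqP; split => g; rewrite /= Ncond_cons /=.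
    by move=> [h1 h2]; split => // _ [x -> <-].
  by move=> [h1 h2]; split => //; apply: h1; exists (dd c i).
apply: openI => //; apply: compact_open_open => //; exact: compact_set1.
Qed.

Hypothesis hmono : forall g : T, H g -> forall x y, x <= y -> g x <= g y.
Hypothesis hbnd : forall g : T, H g -> exists b, forall x, g x != x -> R b x.
Hypothesis hcover : forall x, exists b, R b x.
Hypothesis hQ1 : forall b x, R b x -> forall G, open G -> G x ->
  exists i1 i2, [/\ dd b i1 <= x <= dd b i2,
     (forall z, dd b i1 <= z <= dd b i2 -> G z) &
     nbhs x [set z | dd b i1 <= z <= dd b i2]].
Hypothesis hQ2 : forall b y, R b y -> forall G, open G -> G y ->
  exists j, ee b j y /\ ee b j `<=` G.
Hypothesis hQ3 : forall b j, open (ee b j) /\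
  (forall u v w, u <= v -> v <= w -> ee b j u -> ee b j w -> ee b j v).
Hypothesis hUB : forall beta : nat -> I, exists b, forall n, leI (beta n) b.

Lemma homeo_inj (g : T) : H g -> injective g.
Proof. by move=> [[g' [gK _ _ _]] _]; exact: can_inj gK. Qed.

Lemma homeo_cont (g : T) : H g -> continuous g.
Proof. by move=> [[g' [_ _ cg _]] _]. Qed.

Theorem tight_abstract : countably_tight_subspace H.
Proof.
move=> A p AH Hp clAp.
have [b0 _] := hbnd Hp.
have /choice[bnd Hbnd] : forall g : T, exists b,
    H g -> forall x, g x != x -> R b x.
  move=> g; have [hg|nhg] := pselect (H g).
    by have [b hb] := hbnd hg; exists b.
  by exists b0.
have /choice[ub Hub] : forall beta : nat -> I, exists b, forall n, leI (beta n) b.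
  exact: hUB.
pose pick c s : T := xget p (A `&` Ncond c s).
pose beta c := (fun k => match k with
  | 0 => c
  | k'.+1 => match (unpickle k' : option (seq (nat * nat))) with
             | Some s => bnd (pick c s) | None => c end end).
pose next c := ub (beta c).
pose b := fix b n := match n with 0 => bnd p | n'.+1 => next (b n') end.
have bS n : leI (b n) (b n.+1) by apply: (Hub (beta (b n)) 0).
have bSup n s : R (bnd (pick (b n) s)) `<=` R (b n.+1).
  by have [+ _ _] := Hub (beta (b n)) (pickle s).+1; rewrite /beta pickleK.
have bmono n m : (n <= m)%N -> leI (b n) (b m).
  elim: m => [|m IH]; rewrite ?leqn0.
    by move=> /eqP->; split => // [i|j]; [exists i|exists j].
  rewrite leq_eqVlt => /orP[/eqP->|]; first by split => // [i|j]; [exists i|exists j].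
  by rewrite ltnS => /IH h; exact: leI_trans h (bS m).
pose C := [set g | exists n s, g = pick (b n) s /\ A `&` Ncond (b n) s !=set0].
exists C; first split.
- by move=> g [n [s [-> ne]]]; have [] := xgetPex p ne.
- apply: (sub_countable (B := [set: nat * seq (nat * nat)])) => //.
  apply: (card_le_trans _ (card_image_le (fun ns => pick (b ns.1) ns.2) setT)).
  apply: subset_card_le => g [n [s [-> _]]]; by exists (n, s).
pose Good (g : T) := H g /\ forall x, (forall k, ~ R (b k) x) -> g x = x.
pose P (Q : set T) := exists n s, Ncond (b n) s p /\
   forall g, Good g -> Ncond (b n) s g -> Q g.
have PT : P setT by exists 0%N, [::]; split => // ? ?; rewrite in_nil.
have Psub Q1 Q2 : P Q1 -> (forall g, Good g -> Q1 g -> Q2 g) -> P Q2.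
  move=> [n [s [ps h]]] sQ; exists n, s; split => // g Gg Ng.
  exact: sQ (h g Gg Ng).
have PI Q1 Q2 : P Q1 -> P Q2 -> P (Q1 `&` Q2).
  move=> [n1 [s1 [ps1 h1]]] [n2 [s2 [ps2 h2]]].
  have [s1' e1] := leI_transl s1 (bmono n1 (maxn n1 n2) (leq_maxl _ _)).
  have [s2' e2] := leI_transl s2 (bmono n2 (maxn n1 n2) (leq_maxr _ _)).
  exists (maxn n1 n2), (s1' ++ s2'); split.
    by apply/Ncond_cat; rewrite e1 e2.
  by move=> g Gg /Ncond_cat[/e1 n1g /e2 n2g]; split; [exact: h1|exact: h2].
have pfix x : ~ R (b 0%N) x -> p x = x.
  by move=> nR; apply/eqP; apply: contrapT => /negP/(Hbnd _ Hp).
have pR k x : R (b k) x -> R (b k) (p x).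
  move=> Rx; have [->//|/eqP px] := eqVneq (p x) x.
  have : p (p x) != p x by apply/negP => /eqP/(homeo_inj Hp).
  move=> /(Hbnd _ Hp) Rpx.
  by have [+ _ _] := bmono 0%N k (leq0n _); apply.
have pc := homeo_cont Hp.
have L y V : open V -> V (p y) -> P [set g | V (g y)].
  move=> oV Vpy; have [[k Rk]|nR] := pselect (exists k, R (b k) y); last first.
    exists 0%N, [::]; split => [? |g [_ Gg] _]; rewrite ?in_nil //=.
    have nR' : forall k, ~ R (b k) y by move=> k Rk; apply: nR; exists k.
    by rewrite Gg // -(pfix y (nR' 0%N)).
  have [j [Epy EV]] := hQ2 (pR _ _ Rk) (oV) Vpy.
  have [oE cE] := hQ3 (b k) j.
  have oG : open (p @^-1` ee (b k) j) by apply: open_comp => // z _; exact: pc.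
  have [i1 [i2 [/andP[d1y yd2] dG _]]] := hQ1 Rk oG Epy.
  exists k, [:: (i1, j); (i2, j)]; split.
    apply/Ncond_cons; split; first by apply: dG; rewrite lexx (le_trans d1y).
    apply/Ncond_cons; split; last by move=> ?; rewrite in_nil.
    by apply: dG; rewrite lexx (le_trans d1y).
  move=> g [Hg _] /Ncond_cons[/= e1 /Ncond_cons[/= e2 _]]; apply: EV.
  by apply: (cE _ _ _ (hmono Hg d1y) (hmono Hg yd2)).
have M x O : open O -> O (p x) -> exists U, [/\ open U, U x &
    P [set g | [set g z | z in U] `<=` O]].
  move=> oO Opx; have [V [oV Vpx VO cV]] := open_convex_nbhs oO Opx.
  have oG : open (p @^-1` V) by apply: open_comp => // z _; exact: pc.
  have [c Rc] := hcover x.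
  have [i1 [i2 [/andP[d1x xd2] dG nx]]] := hQ1 Rc oG Vpx.
  exists (interior [set z | dd c i1 <= z <= dd c i2]); split.
  - exact: open_interior.
  - exact: nx.
  have d1I : dd c i1 <= dd c i1 <= dd c i2 by rewrite lexx (le_trans d1x xd2).
  have d2I : dd c i1 <= dd c i2 <= dd c i2 by rewrite lexx (le_trans d1x xd2).
  have P1 := L (dd c i1) V oV (dG _ d1I).
  have P2 := L (dd c i2) V oV (dG _ d2I).
  apply: (Psub _ _ (PI _ _ P1 P2)) => g [Hg _] [/= V1 V2] _ [z /interior_subset /andP[z1 z2] <-].
  by apply: VO; apply: (cV _ _ _ (hmono Hg z1) (hmono Hg z2)).
have Psingle K O : compact K -> open O -> [set p z | z in K] `<=` O ->
    P [set g | [set g z | z in K] `<=` O].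
  move=> cK oO pKO.
  apply: (compact_induct (F := fun Y => P [set g | [set g z | z in Y] `<=` O])) => //.
  - by apply: (Psub _ _ PT) => g _ _ z [x []].
  - move=> Y1 Y2 P1 P2; apply: (Psub _ _ (PI _ _ P1 P2)) => g _ [h1 h2] _ [z [Yz|Yz] <-].
      by apply: h1; exists z.
    by apply: h2; exists z.
  - move=> Y1 Y2 s12 PY; apply: (Psub _ _ PY) => g _ h z [x Yx <-].
    by apply: h; exists x => //; exact: s12.
  - move=> x Kx; have [U [oU Ux PU]] := M x O oO (pKO _ (ex_intro2 _ _ x Kx erefl)).
    by exists U.
move=> B nB.
pose Dg := [set t : nat * (nat -> set X) * (nat -> set X) | forall i, (i < t.1.1)%N ->
   [/\ compact (t.1.2 i), open (t.2 i) & [set p z | z in t.1.2 i] `<=` t.2 i]].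
pose Sg (t : nat * (nat -> set X) * (nat -> set X)) :=
  [set g : T | forall i, (i < t.1.1)%N -> [set g z | z in t.1.2 i] `<=` t.2 i].
have GF : Filter (filter_from Dg Sg).
  apply: filter_from_filter; first by exists (0%N, (fun _ => set0), (fun _ => set0)).
  move=> [[n K] O] [[n' K'] O'] /= D1 D2.
  exists (n + n', (fun i => if (i < n)%N then K i else K' (i - n)),
                 (fun i => if (i < n)%N then O i else O' (i - n)))%N.
    move=> i /= ilt; case: ifP => [/D1 //|/negbT]; rewrite -leqNgt => ni.
    by apply: D2; rewrite ltn_subLR.
  move=> g /= h; split => i /= ilt.
    by have := h i (ltn_addr _ ilt); rewrite /= ilt.
  have e : (n + i < n)%N = false by rewrite ltnNge leq_addr.
  by have := h (n + i)%N; rewrite /= ltn_add2l e addKn; apply.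
have Gp : filter_from Dg Sg --> p.
  apply/compact_open_cvgP => K O cK oO pKO.
  exists (1%N, (fun _ => K), (fun _ => O)); first by move=> i _; split.
  by move=> g /= h; apply: (h 0%N).
have [[[n K] O] Dt StB] := Gp B nB.
have PS : P (Sg (n, K, O)).
  elim: n Dt {StB} => [|n IH] Dt.
    by apply: (Psub _ _ PT) => g _ _ i.
  have PIH : P (Sg (n, K, O)).
    by apply: IH => i ilt; apply: Dt; rewrite /= ltnW // ltnS.
  have [cK oO pKO] := Dt n (ltnSn n).
  apply: (Psub _ _ (PI _ _ PIH (Psingle _ _ cK oO pKO))) => g _ [h1 h2] i /=.
  rewrite ltnS leq_eqVlt => /orP[/eqP->//|]; exact: h1.
have [m [s [ps h]]] := PS.
have oN : open (Ncond (b m) s) by apply: Ncond_open => j; have [] := hQ3 (b m) j.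
have ne : A `&` Ncond (b m) s !=set0.
  by apply: clAp; apply: open_nbhs_nbhs; split.
have [Ag Ng] := xgetPex p ne.
exists (pick (b m) s); split; last first.
  apply: StB; apply: h => //; split; first exact: AH.
  move=> x nR; apply/eqP; apply: contrapT => /negP nfix.
  apply: (nR m.+1); apply: bSup; exact: Hbnd (AH _ Ag) x nfix.
by exists m, s.
Qed.
End Abstract.

Section Gen.
Context {dX : Order.disp_t} {X : orderTopologicalType dX}.
Implicit Types x y z u v : X.

Lemma nbhs_left x (U : set X) : nbhs x U ->
  (exists2 l, l < x & forall z, l < z -> z <= x -> U z) \/
  (forall z, z <= x -> U z).
Proof.
rewrite itv_nbhsE => -[i [oi xi] iU].
move: oi xi iU; case: i => [[[]l|[]] [[]r|[]]] //= _; rewrite in_itv /= ?andbT => xi iU.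
- left; exists l; first by move: xi => /andP[].
  move=> z lz zx; apply: iU; rewrite /= in_itv /= lz /=.
  by move: xi => /andP[_ xr]; exact: le_lt_trans zx xr.
- by left; exists l => // z lz zx; apply: iU; rewrite /= in_itv /= lz.
- by right => z zx; apply: iU; rewrite /= in_itv /=; exact: le_lt_trans zx xi.
- by right => z zx; apply: iU; rewrite /= in_itv.
Qed.

Lemma nbhs_right x (U : set X) : nbhs x U ->
  (exists2 r, x < r & forall z, x <= z -> z < r -> U z) \/
  (forall z, x <= z -> U z).
Proof.
rewrite itv_nbhsE => -[i [oi xi] iU].
move: oi xi iU; case: i => [[[]l|[]] [[]r|[]]] //= _; rewrite in_itv /= ?andbT => xi iU.
- left; exists r; first by move: xi => /andP[].
  move=> z xz zr; apply: iU; rewrite /= in_itv /= zr andbT.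
  by move: xi => /andP[lx _]; exact: lt_le_trans lx xz.
- by right => z xz; apply: iU; rewrite /= in_itv /= andbT; exact: lt_le_trans xi xz.
- by left; exists r => // z xz zr; apply: iU; rewrite /= in_itv /=.
- by right => z zx; apply: iU; rewrite /= in_itv.
Qed.

Lemma nbhs_oo l x r : l < x -> x < r -> nbhs x [set z | l < z < r].
Proof.
move=> lx xr; apply: open_nbhs_nbhs; split.
  by have := @itv_open _ X l r; congr open; apply/seteqP; split => z; rewrite /= in_itv.
by rewrite /= lx xr.
Qed.

Lemma nbhs_lo x r : x < r -> nbhs x [set z | z < r].
Proof.
move=> xr; apply: open_nbhs_nbhs; split => //.
by have := @lray_open _ X r; congr open; apply/seteqP; split => z; rewrite /= in_itv.
Qed.

Variable hdense : forall x y, x < y -> exists z, x < z < y.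
Variable hsup : forall S : set X, S !=set0 -> (exists B, forall s, S s -> s <= B) ->
  exists u, (forall s, S s -> s <= u) /\ (forall v, (forall s, S s -> s <= v) -> u <= v).

Lemma conn_cut a b (F1 F2 : set X) : a <= b -> closed F1 -> closed F2 ->
  (forall t, a <= t <= b -> F1 t \/ F2 t) -> F1 a -> F2 b ->
  exists u, [/\ a <= u <= b, F1 u & F2 u].
Proof.
move=> ab cF1 cF2 cov F1a F2b.
pose S := [set t | F1 t /\ a <= t <= b].
have ne : S !=set0 by exists a; split => //; rewrite lexx ab.
have bd : exists B, forall s, S s -> s <= B by exists b => s [_ /andP[]].
have [u [ubu leu]] := hsup ne bd.
have au : a <= u by apply: ubu; split => //; rewrite lexx ab.
have ub : u <= b by apply: leu => s [_ /andP[]].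
have F1u : F1 u.
  apply: contrapT => nF1.
  have oC : open (~` F1) by exact: closed_openC.
  case: (nbhs_left (open_nbhs_nbhs (conj oC nF1))) => [[l lu hl]|h].
    have : u <= l.
      apply: leu => s [F1s /andP[aS sb]]; rewrite leNgt; apply/negP => ls.
      by apply: (hl s ls _ F1s); apply: ubu; split => //; rewrite aS sb.
    by rewrite leNgt lu.
  exact: h a au F1a.
exists u; split => //; first by rewrite au ub.
apply: contrapT => nF2.
have ub' : u < b by rewrite lt_neqAle ub andbT; apply/negP => /eqP ueq; apply: nF2; rewrite ueq.
have oC : open (~` F2) by exact: closed_openC.
case: (nbhs_right (open_nbhs_nbhs (conj oC nF2))) => [[r ur hr]|h]; last first.
  exact: h b (ltW ub') F2b.
have umin : u < Order.min r b by rewrite lt_min ur ub'.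
have [v /andP[uv vm]] := hdense umin.
move: vm; rewrite lt_min => /andP[vr vb].
have nF2v := hr v (ltW uv) vr.
have F1v : F1 v by case: (cov v) => //; rewrite (le_trans au (ltW uv)) ltW.
have : v <= u by apply: ubu; split => //; rewrite (le_trans au (ltW uv)) ltW.
by rewrite leNgt uv.
Qed.

Lemma cut_val (g : X -> X) a b c : continuous g -> a <= b ->
  ((g a <= c <= g b) \/ (g b <= c <= g a)) -> exists u, a <= u <= b /\ g u = c.
Proof.
move=> cg ab hc.
have cl1 : closed (g @^-1` [set y | y <= c]).
  apply: preimage_closed => [z _|]; first exact: cg.
  by have := @lray_closed _ X c; congr closed; apply/seteqP; split => z; rewrite /= in_itv.
have cl2 : closed (g @^-1` [set y | c <= y]).
  apply: preimage_closed => [z _|]; first exact: cg.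
  by have := @rray_closed _ X c; congr closed; apply/seteqP; split => z; rewrite /= in_itv /= andbT.
have cov (t : X) : g t <= c \/ c <= g t by case: (leP (g t) c) => h; [left|right; exact: ltW].
case: hc => /andP[h1 h2].
- have [u [uab F1u F2u]] := conn_cut ab cl1 cl2 (fun t _ => cov t) h1 h2.
  by exists u; split => //; apply/le_anti; rewrite F1u F2u.
- have cov' (t : X) : a <= t <= b -> c <= g t \/ g t <= c by move=> _; case: (cov t); [right|left].
  have [u [uab F1u F2u]] := conn_cut ab cl2 cl1 cov' h2 h1.
  by exists u; split => //; apply/le_anti; rewrite F1u F2u.
Qed.

Lemma between (g : X -> X) : continuous g -> injective g ->
  forall x y z, x < y -> y < z ->
  ~ (g x < g y /\ g z < g y) /\ ~ (g y < g x /\ g y < g z).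
Proof.
move=> cg ig x y z xy yz; split => -[h1 h2].
- case: (leP (g x) (g z)) => hxz.
  + have [u [/andP[xu uy] /ig uz]] := @cut_val g x y (g z) cg (ltW xy)
      (or_introl (introT andP (conj hxz (ltW h2)))).
    by move: (le_lt_trans uy yz); rewrite uz ltxx.
  + have [u [/andP[yu uz] /ig ux]] := @cut_val g y z (g x) cg (ltW yz)
      (or_intror (introT andP (conj (ltW hxz) (ltW h1)))).
    by move: (lt_le_trans xy yu); rewrite ux ltxx.
- case: (leP (g x) (g z)) => hxz.
  + have [u [/andP[yu uz] /ig ux]] := @cut_val g y z (g x) cg (ltW yz)
      (or_introl (introT andP (conj (ltW h1) hxz))).
    by move: (lt_le_trans xy yu); rewrite ux ltxx.
  + have [u [/andP[xu uy] /ig uz]] := @cut_val g x y (g z) cg (ltW xy)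
      (or_intror (introT andP (conj (ltW h2) (ltW hxz)))).
    by move: (le_lt_trans uy yz); rewrite uz ltxx.
Qed.

Lemma mono_fix (g : X -> X) : continuous g -> injective g ->
  (exists c0, forall z, c0 <= z -> g z = z) -> (forall x, exists y, x < y) ->
  forall x y, x <= y -> g x <= g y.
Proof.
move=> cg ig [c0 hc0] nomax x y; rewrite le_eqVlt => /orP[/eqP->//|xy].
have [c1 yc1] := nomax (Order.max y c0).
move: yc1; rewrite gt_max => /andP[yc1 c0c1].
have [c2 c1c2] := nomax c1.
have g1 : g c1 = c1 by apply: hc0; exact: ltW.
have g2 : g c2 = c2 by apply: hc0; exact: ltW (lt_trans c0c1 c1c2).
have below t : t < c1 -> g t < c1.
  move=> tc1; have [_ b2] := between cg ig tc1 c1c2.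
  rewrite g1 g2 in b2.
  case: (ltgtP (g t) c1) => // h; first by exfalso; apply: b2; split.
  by move: h; rewrite -{1}g1 => /ig h; move: tc1; rewrite h ltxx.
have [_ b2] := between cg ig xy yc1.
case: (leP (g x) (g y)) => // h; exfalso; apply: b2; split => //.
by rewrite g1; apply: below.
Qed.

End Gen.

Section Gen2.
Context {dX : Order.disp_t} {X : orderTopologicalType dX}.
Implicit Types x y z u v : X.

Lemma bounded_above (K : set X) : (forall x, exists y, x < y) -> compact K ->
  forall z0, exists c, z0 <= c /\ forall y, K y -> y < c.
Proof.
move=> nomax cK.
apply: (compact_induct (F := fun Y => forall z0, exists c, z0 <= c /\ forall y, Y y -> y < c)) => //.
- by move=> z0; exists z0.
- move=> A B FA FB z0; have [c1 [z0c1 h1]] := FA z0; have [c2 [c1c2 h2]] := FB c1.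
  exists c2; split; first exact: le_trans z0c1 c1c2.
  by move=> y [/h1 yc1|/h2 //]; exact: lt_le_trans yc1 c1c2.
- by move=> A B AB FB z0; have [c [? h]] := FB z0; exists c; split => // y /AB /h.
- move=> x Kx; have [y xy] := nomax x.
  exists [set z | z < y]; split => //.
    by have := @lray_open _ X y; congr open; apply/seteqP; split => z; rewrite /= in_itv.
  move=> z0; case: (leP z0 y) => h; first by exists y.
  by exists z0; split => // w wy; exact: lt_trans wy h.
Qed.

Lemma bounded_below (K : set X) : (forall x, exists y, y < x) -> compact K ->
  forall z0, exists c, c <= z0 /\ forall y, K y -> c < y.
Proof.
move=> nomin cK.
apply: (compact_induct (F := fun Y => forall z0, exists c, c <= z0 /\ forall y, Y y -> c < y)) => //.
- by move=> z0; exists z0.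
- move=> A B FA FB z0; have [c1 [z0c1 h1]] := FA z0; have [c2 [c1c2 h2]] := FB c1.
  exists c2; split; first exact: le_trans c1c2 z0c1.
  by move=> y [/h1 yc1|/h2 //]; exact: le_lt_trans c1c2 yc1.
- by move=> A B AB FB z0; have [c [? h]] := FB z0; exists c; split => // y /AB /h.
- move=> x Kx; have [y xy] := nomin x.
  exists [set z | y < z]; split => //.
    by have := @rray_open _ X y; congr open; apply/seteqP; split => z; rewrite /= in_itv /= andbT.
  move=> z0; case: (leP y z0) => h; first by exists y.
  by exists z0; split => // w wy; exact: lt_trans h wy.
Qed.

Lemma countable_enum (T : choiceType) (D : set T) : countable D -> D !=set0 ->
  exists e : nat -> T, (forall n, D (e n)) /\ (forall t, D t -> exists n, e n = t).
Proof.
move=> /countable_injP[f finj] [t0 Dt0].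
exists (fun n => xget t0 [set t | D t /\ f t = n]); split.
  by move=> n; case: xgetP => // t _ [].
move=> t Dt; exists (f t); case: xgetP => [t' _ [Dt' ft]|h].
  by apply: finj; rewrite ?inE.
by exfalso; apply: (h t).
Qed.

Lemma open_oo a b : open [set y : X | a < y < b].
Proof. by have := @itv_open _ X a b; congr open; apply/seteqP; split => z; rewrite /= in_itv. Qed.

Lemma open_lo b : open [set y : X | y < b].
Proof. by have := @lray_open _ X b; congr open; apply/seteqP; split => z; rewrite /= in_itv. Qed.

End Gen2.

Section Inst.
Context {dX : Order.disp_t} {X : orderTopologicalType dX}.
Implicit Types x y z u v : X.

Variable hdense : forall x y, x < y -> exists z, x < z < y.
Variable hsup : forall S : set X, S !=set0 -> (exists B, forall s, S s -> s <= B) ->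
  exists u, (forall s, S s -> s <= u) /\ (forall v, (forall s, S s -> s <= v) -> u <= v).
Variable nomax : forall x, exists y, x < y.
Variables (I : Type) (R D : I -> set X).
Hypothesis GD1 : forall b u z, u < z -> R b z -> exists d, D b d /\ u < d < z.
Hypothesis GD2 : forall b u z, u < z -> R b u -> exists d, D b d /\ u < d < z.
Hypothesis GD3 : forall b x, R b x -> (exists z, z < x) \/ D b x.
Hypothesis hDc : forall b, countable (D b) /\ D b !=set0.
Hypothesis hUB : forall beta : nat -> I, exists b, forall n,
  R (beta n) `<=` R b /\ D (beta n) `<=` D b.
Hypothesis hRub : forall b, exists c, forall x, R b x -> x < c.
Hypothesis hK : forall K : set X, compact K -> exists b, K `<=` R b.

Theorem tight_of_order : countably_tight_subspace (@Homeo_cpt X).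
Proof.
have /choice[dd hdd] : forall b, exists e : nat -> X,
    (forall n, D b (e n)) /\ (forall t, D b t -> exists n, e n = t).
  by move=> b; have [c ne] := hDc b; exact: countable_enum.
pose ee b k : set X := match (unpickle k : option (option nat * nat)) with
  | Some (Some i, j) => [set y | dd b i < y < dd b j]
  | Some (None, j) => [set y | y < dd b j]
  | None => [set y | y < dd b 0%N] end.
have suppR (g : {compact-open, X -> X}) : Homeo_cpt g ->
    exists b, forall x, g x != x -> R b x.
  move=> [_ cpt]; have [b hb] := hK cpt.
  by exists b => x gx; apply: hb; exact: subset_closure.
apply: (@tight_abstract _ X I R dd ee).
- move=> g Hg; have [[g' [gK _ cg _]] _] := Hg.
  have [b hb] := suppR g Hg; have [c hc] := hRub b.
  apply: (mono_fix hdense hsup cg (can_inj gK)) => //.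
  exists c => z cz; apply/eqP; apply: contrapT => /negP/hb/hc.
  by rewrite ltNge cz.
- exact: suppR.
- by move=> x; have [b hb] := hK (@compact_set1 _ x); exists b; apply: hb.
- move=> b x Rx G oG Gx.
  have nG : nbhs x G by exact: open_nbhs_nbhs.
  have [d1 [Dd1 [d1x d1G d1n]]] : exists d1, D b d1 /\ [/\ d1 <= x,
      (forall z, d1 <= z <= x -> G z) &
      (d1 < x \/ forall z, x <= z)].
    have [[z0 z0x]|nz] := pselect (exists z, z < x).
      case: (nbhs_left nG) => [[l lx hl]|hl].
        have [d [Dd /andP[ld dx]]] := GD1 lx Rx.
        exists d; split => //; split; [exact: ltW| |by left].
        by move=> z /andP[dz zx]; apply: hl => //; exact: lt_le_trans ld dz.
      have [d [Dd /andP[zd dx]]] := GD1 z0x Rx.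
      by exists d; split => //; split; [exact: ltW|move=> z /andP[_ /hl]|left].
    have hx z : x <= z by rewrite leNgt; apply/negP => zx; apply: nz; exists z.
    case: (GD3 Rx) => [[z zx]|Dx]; first by exfalso; apply: nz; exists z.
    exists x; split => //; split => //; last by right.
    by move=> z /andP[xz zx]; have -> : z = x by apply/le_anti; rewrite xz zx.
  have [d2 [Dd2 [xd2 d2G]]] : exists d2, D b d2 /\ (x < d2 /\
      (forall z, x <= z <= d2 -> G z)).
    case: (nbhs_right nG) => [[r xr hr]|hr].
      have [d [Dd /andP[xd dr]]] := GD2 xr Rx.
      exists d; split => //; split => // z /andP[xz zd]; apply: hr => //.
      exact: le_lt_trans zd dr.
    have [r xr] := nomax x.
    have [d [Dd /andP[xd dr]]] := GD2 xr Rx.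
    by exists d; split => //; split => // z /andP[xz _]; apply: hr.
  have [i1 e1] := (hdd b).2 _ Dd1; have [i2 e2] := (hdd b).2 _ Dd2.
  exists i1, i2; rewrite e1 e2; split.
  + by rewrite d1x ltW.
  + move=> z /andP[d1z zd2]; case: (leP z x) => zx.
      by apply: d1G; rewrite d1z zx.
    by apply: d2G; rewrite zd2 ltW.
  + case: d1n => [d1x'|hx].
      apply: filterS (nbhs_oo d1x' xd2) => z /andP[d1z zd2].
      by rewrite /= (ltW d1z) (ltW zd2).
    apply: filterS (nbhs_lo xd2) => z zd2.
    by rewrite /= (le_trans d1x (hx z)) (ltW zd2).
- move=> b y Ry G oG Gy.
  have nG : nbhs y G by exact: open_nbhs_nbhs.
  have [e2 [De2 [ye2 e2G]]] : exists e2, D b e2 /\ (y < e2 /\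
      (forall z, y <= z < e2 -> G z)).
    case: (nbhs_right nG) => [[r yr hr]|hr].
      have [d [Dd /andP[yd dr]]] := GD2 yr Ry.
      exists d; split => //; split => // z /andP[yz zd]; apply: hr => //.
      exact: lt_trans zd dr.
    have [r yr] := nomax y.
    have [d [Dd /andP[yd dr]]] := GD2 yr Ry.
    by exists d; split => //; split => // z /andP[yz _]; apply: hr.
  have [i2 ei2] := (hdd b).2 _ De2.
  have [[z0 z0y]|nz] := pselect (exists z, z < y).
    have [e1 [De1 [e1y e1G]]] : exists e1, D b e1 /\ (e1 < y /\
        (forall z, e1 < z <= y -> G z)).
      case: (nbhs_left nG) => [[l ly hl]|hl].
        have [d [Dd /andP[ld dy]]] := GD1 ly Ry.
        exists d; split => //; split => // z /andP[dz zy]; apply: hl => //.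
        exact: lt_trans ld dz.
      have [d [Dd /andP[zd dy]]] := GD1 z0y Ry.
      by exists d; split => //; split => // z /andP[_ /hl].
    have [i1 ei1] := (hdd b).2 _ De1.
    exists (pickle (Some i1, i2)); rewrite /ee pickleK ei1 ei2; split.
      by rewrite /= e1y ye2.
    move=> z /andP[e1z ze2]; case: (leP z y) => zy.
      by apply: e1G; rewrite e1z zy.
    by apply: e2G; rewrite ze2 ltW.
  exists (pickle (None : option nat, i2)); rewrite /ee pickleK ei2; split => //.
  move=> z ze2; case: (leP z y) => zy.
    have -> : z = y => //; apply/le_anti; rewrite zy /=.
    by rewrite leNgt; apply/negP => zy'; apply: nz; exists z.
  by apply: e2G; rewrite ze2 ltW.
- move=> b j; rewrite /ee; case: (unpickle j) => [[[i|] k]|]; split.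
  + exact: open_oo.
  + move=> u v w uv vw /andP[iu _] /andP[_ wk].
    by rewrite /= (lt_le_trans iu uv) (le_lt_trans vw wk).
  + exact: open_lo.
  + by move=> u v w uv vw _ wk; exact: le_lt_trans vw wk.
  + exact: open_lo.
  + by move=> u v w uv vw _ wk; exact: le_lt_trans vw wk.
- move=> beta; have [b hb] := hUB beta; exists b => n.
  have [RR DD] := hb n.
  have tr i : exists i', dd b i' = dd (beta n) i.
    by apply: (hdd b).2; apply: DD; exact: (hdd (beta n)).1.
  split; [exact: RR|exact: tr|].
  move=> j; rewrite /ee; case: (unpickle j) => [[[i|] k]|].
  + have [i' ei] := tr i; have [k' ek] := tr k.
    by exists (pickle (Some i', k')); rewrite pickleK ei ek.
  + have [k' ek] := tr k.
    by exists (pickle (None : option nat, k')); rewrite pickleK ek.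
  + have [k' ek] := tr 0%N.
    by exists (pickle (None : option nat, k')); rewrite pickleK ek.
Qed.

End Inst.

Section Ray.
Variables (R : realType) (d : Order.disp_t) (W : orderType d).
Hypothesis hW : is_omega1 W.
Local Notation X := (@LongRay R d W).

Lemma W_min (S : set W) : S !=set0 -> exists m, S m /\ forall s, S s -> m <= s.
Proof.
case: hW => wf _ _ [w Sw].
elim/(well_founded_ind wf): w Sw => w IH Sw.
have [[s [Ss sw]]|h] := pselect (exists s, S s /\ s < w); first exact: IH Ss.
exists w; split => // s Ss; rewrite leNgt; apply/negP => sw; apply: h; by exists s.
Qed.

Lemma W_bound (beta : nat -> W) : exists w, forall n, beta n < w.
Proof.
case: hW => _ unc segc; apply: contrapT => /forallNP h.
apply: unc; apply: (@sub_countable _ _ _ (\bigcup_(n in [set: nat]) [set v | v <= beta n])).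
  apply: subset_card_le => w _; have := h w => /existsNP[n].
  by move/negP; rewrite -leNgt => wb; exists n.
apply: bigcup_countable => // n _.
apply: (@sub_countable _ _ _ ([set v | v < beta n] `|` [set beta n])).
  by apply: subset_card_le => v; rewrite /= le_eqVlt => /orP[/eqP->|]; [right|left].
apply: (@sub_countable _ _ _ (\bigcup_(b in [set: bool]) (if b then [set v | v < beta n] else [set beta n]))).
  by apply: subset_card_le => v [vb|->]; [exists true|exists false].
apply: bigcup_countable => // -[] _ //; exact: countable1.
Qed.

Lemma W_nomax (w : W) : exists w', w < w'.
Proof. by have [w' h] := W_bound (fun _ => w); exists w'; exact: h 0%N. Qed.

Lemma W_ne : exists w : W, True.
Proof.
case: hW => _ unc _; apply: contrapT => h; apply: unc.
have -> : [set: W] = set0 by apply/seteqP; split => // w _; apply: h; exists w.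
exact: countable0.
Qed.

Lemma W_succ (w : W) : exists s, w < s /\ forall v, w < v -> s <= v.
Proof.
have [w' ww'] := W_nomax w.
by have [s [ws h]] := @W_min [set v | w < v] (ex_intro _ w' ww'); exists s.
Qed.


Lemma in01_0 : @in01 R 0%R.
Proof. by rewrite /in01 lexx ltr01. Qed.

Definition zero01 : @I01 R := exist _ 0%R in01_0.
Definition mk01 (r : R) : @I01 R := insubd zero01 r.

Lemma mk01K r : @in01 R r -> val (mk01 r) = r.
Proof. by move=> h; rewrite /mk01 insubdK. Qed.

Lemma I01_ge0 (t : @I01 R) : (0 <= val t)%R.
Proof. by case: t => r /= /andP[]. Qed.

Lemma I01_lt1 (t : @I01 R) : (val t < 1)%R.
Proof. by case: t => r /= /andP[]. Qed.

Lemma le01 (s t : @I01 R) : (s <= t) = (val s <= val t)%R.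
Proof. exact: leEsub. Qed.

Lemma lt01 (s t : @I01 R) : (s < t) = (val s < val t)%R.
Proof. exact: ltEsub. Qed.

Lemma zero01_le (t : @I01 R) : zero01 <= t.
Proof. by rewrite le01 /= I01_ge0. Qed.

Lemma ray_le (x y : X) : (x <= y) = (x.1 < y.1) || ((x.1 == y.1) && (x.2 <= y.2)).
Proof.
case: x => [x1 x2]; case: y => [y1 y2]; rewrite /= [LHS]lexi_pair.
by case: (ltgtP x1 y1).
Qed.

Lemma ray_lt (x y : X) : (x < y) = (x.1 < y.1) || ((x.1 == y.1) && (x.2 < y.2)).
Proof.
case: x => [x1 x2]; case: y => [y1 y2]; rewrite /= [LHS]ltxi_pair.
by case: (ltgtP x1 y1).
Qed.

Lemma ray_le1 (x y : X) : x <= y -> x.1 <= y.1.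
Proof. by rewrite ray_le => /orP[/ltW//|/andP[/eqP->]]. Qed.

Lemma ray_lt1 (x y : X) : x.1 < y.1 -> x < y.
Proof. by move=> h; rewrite ray_lt h. Qed.

Lemma ray_le_same (x y : X) : x.1 = y.1 -> (x <= y) = (x.2 <= y.2).
Proof. by move=> e; rewrite ray_le e ltxx eqxx. Qed.

Lemma ray_lt_same (x y : X) : x.1 = y.1 -> (x < y) = (x.2 < y.2).
Proof. by move=> e; rewrite ray_lt e ltxx eqxx. Qed.

Definition Drat (x : X) := exists q : rat, val x.2 = ratr q.

Lemma ray_dense_rat (u z : X) : u < z -> exists c, Drat c /\ u < c < z.
Proof.
have mk q : ((val u.2 < (ratr q : R)) && ((ratr q : R) < 1))%R -> exists c : X, [/\ Drat c, c.1 = u.1 & val c.2 = ratr q].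
  move=> /andP[uq q1]; have h : @in01 R (ratr q).
    by rewrite /in01 q1 andbT (le_trans (I01_ge0 _) (ltW uq)).
  by exists (u.1, mk01 (ratr q)); split => //=; [exists q|]; rewrite mk01K.
rewrite ray_lt => /orP[h|/andP[/eqP e h]].
- have [q] := @rat_in_itvoo R _ _ (I01_lt1 u.2); rewrite in_itv /= => hq.
  have [c [Dc c1 c2]] := mk q hq; exists c; split => //.
  rewrite (ray_lt_same (esym c1)) lt01 c2 ray_lt1 ?c1 // andbT.
  by case/andP: hq.
- move: h; rewrite lt01 => h.
  have [q] := @rat_in_itvoo R _ _ h; rewrite in_itv /= => /andP[q1 q2].
  have [c [Dc c1 c2]] : exists c : X, [/\ Drat c, c.1 = u.1 & val c.2 = ratr q].
    by apply: mk; rewrite q1 (lt_trans q2 (I01_lt1 _)).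
  exists c; split => //.
  by rewrite (ray_lt_same (esym c1)) (ray_lt_same (etrans c1 e)) !lt01 c2 q1 q2.
Qed.

Lemma ray_nomax (x : X) : exists y, x < y.
Proof. by have [w xw] := W_nomax x.1; exists ((w, zero01) : X); exact: ray_lt1. Qed.

Lemma ray_min : exists m : X, forall x, m <= x.
Proof.
have [w _] := W_ne.
have [w0 [_ h]] := @W_min setT (ex_intro _ w I).
exists ((w0, zero01) : X) => x; rewrite ray_le /=.
have := h x.1 I; rewrite le_eqVlt => /orP[/eqP->|->//].
by rewrite eqxx ltxx zero01_le.
Qed.

Lemma ray_bound (beta : nat -> X) : exists b : X, forall n, beta n < b.
Proof.
have [w h] := W_bound (fun n => (beta n).1).
by exists ((w, zero01) : X) => n; apply: ray_lt1; exact: h.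
Qed.

Lemma ray_countD (b : X) : countable [set y : X | y <= b /\ Drat y].
Proof.
case: hW => _ _ segc.
have [w' bw'] := W_nomax b.1.
pose phi (vq : W * rat) : X := (vq.1, mk01 (ratr vq.2)).
apply: (@sub_countable _ _ _ (phi @` ([set v | v < w'] `*` [set: rat]))).
  apply: subset_card_le => y [yb [q yq]].
  exists (y.1, q).
    by split => //=; exact: le_lt_trans (ray_le1 yb) bw'.
  rewrite /phi /=; case: y yb yq => y1 y2 /= _ yq; congr pair.
  by apply: val_inj; rewrite mk01K -yq //; exact: valP.
apply: card_le_trans (card_image_le _ _) _.
by apply: countableX => //; exact: segc.
Qed.

Lemma ray_sup (S : set X) : S !=set0 -> (exists B, forall s, S s -> s <= B) ->
  exists u, (forall s, S s -> s <= u) /\ (forall v, (forall s, S s -> s <= v) -> u <= v).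
Proof.
move=> [s0 Ss0] [B hB].
have ne : [set w | forall s, S s -> s.1 <= w] !=set0.
  by exists B.1 => s Ss; exact: ray_le1 (hB s Ss).
have [ws [Uws wsmin]] := W_min ne.
have ubv v : (forall s, S s -> s <= v) -> ws <= v.1.
  by move=> hv; apply: wsmin => s Ss; exact: ray_le1 (hv s Ss).
have [[s1 [Ss1 s1e]]|nA] := pselect (exists s, S s /\ s.1 = ws); last first.
  exists ((ws, zero01) : X); split.
    move=> s Ss; apply: ltW; apply: ray_lt1 => /=.
    rewrite lt_neqAle Uws // andbT; apply/eqP => e; apply: nA; by exists s.
  move=> v hv; have := ubv v hv; rewrite le_eqVlt => /orP[/eqP e|lt].
    by rewrite ray_le_same //= zero01_le.
  by apply: ltW; exact: ray_lt1.
pose T := [set r : R | exists s, [/\ S s, s.1 = ws & val s.2 = r]].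
have Tne : T !=set0 by exists (val s1.2); exists s1.
have hT : has_ubound T by exists 1%R => r [s [_ _ <-]]; exact: ltW (I01_lt1 _).
have sig_ub r : T r -> (r <= sup T)%R by move=> Tr; exact: ub_le_sup hT r Tr.
have key v : (forall s, S s -> s <= v) -> v.1 = ws -> (sup T <= val v.2)%R.
  move=> hv e; apply: ge_sup => // r [s [Ss se <-]].
  by have := hv s Ss; rewrite ray_le_same ?le01 // se e.
case: (ltP (sup T) 1%R) => [slt|sge].
- have h01 : @in01 R (sup T).
    rewrite /in01 slt andbT; apply: le_trans (I01_ge0 s1.2) _.
    by apply: sig_ub; exists s1.
  exists ((ws, mk01 (sup T)) : X); split.
  + move=> s Ss; have := Uws s Ss; rewrite le_eqVlt => /orP[/eqP e|lt]; last first.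
      by apply: ltW; exact: ray_lt1.
    rewrite ray_le_same //= le01 mk01K //; apply: sig_ub; by exists s.
  + move=> v hv; have := ubv v hv; rewrite le_eqVlt => /orP[/eqP e|lt]; last first.
      by apply: ltW; exact: ray_lt1.
    by rewrite ray_le_same //= le01 mk01K //; exact: key.
- have [sw [wsw swmin]] := W_succ ws.
  exists ((sw, zero01) : X); split.
  + move=> s Ss; apply: ltW; apply: ray_lt1 => /=; exact: le_lt_trans (Uws s Ss) wsw.
  + move=> v hv; have := ubv v hv; rewrite le_eqVlt => /orP[/eqP e|lt].
      have := key v hv (esym e); have := I01_lt1 v.2.
      by move=> h1 h2; move: (le_lt_trans h2 h1); rewrite ltNge sge.
    have := swmin _ lt; rewrite le_eqVlt => /orP[/eqP e'|lt'].
      by rewrite ray_le_same //= zero01_le.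
    by apply: ltW; exact: ray_lt1.
Qed.

End Ray.

Section RayTight.
Variables (R : realType) (d : Order.disp_t) (W : orderType d).
Hypothesis hW : is_omega1 W.
Local Notation X := (@LongRay R d W).

Lemma ray_dense (x y : X) : x < y -> exists z, x < z < y.
Proof. by move=> /(ray_dense_rat)[c [_ h]]; exists c. Qed.

Theorem ray_tight : countably_tight_subspace (@Homeo_cpt X).
Proof.
have [m hm] := ray_min R hW.
have Drm : Drat m.
  suff e : m.2 = (zero01 R) by exists 0%Q; rewrite e /= rmorph0.
  have : m <= ((m.1, (zero01 R)) : X) by exact: hm.
  rewrite ray_le_same // le01 /= => h; apply/val_inj/le_anti; rewrite h /=.
  exact: I01_ge0.
apply: (@tight_of_order _ X (@ray_dense) (ray_sup hW) (ray_nomax hW) X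
   (fun b => [set y | y < b]) (fun b => [set y | y <= b /\ Drat y])).
- move=> b u z uz zb; have [c [Dc /andP[uc cz]]] := ray_dense_rat uz.
  by exists c; split; [split => //; exact: ltW (lt_trans cz zb)|rewrite uc cz].
- move=> b u z uz ub; have umin : u < Order.min z b by rewrite lt_min uz ub.
  have [c [Dc /andP[uc]]] := ray_dense_rat umin; rewrite lt_min => /andP[cz cb].
  by exists c; split; [split => //; exact: ltW|rewrite uc cz].
- move=> b x xb; have [->|nm] := eqVneq x m; last first.
    by left; exists m; rewrite lt_neqAle eq_sym nm hm.
  by right; split => //; exact: ltW.
- move=> b; split; first exact: ray_countD.
  have [mb|bm] := leP m b; first by exists m.
  by move: (lt_le_trans bm (hm b)); rewrite ltxx.
- move=> beta; have [b hb] := ray_bound hW beta; exists b => n; split.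
    by move=> y /= yb; exact: lt_trans yb (hb n).
  by move=> y /= [yb Dy]; split => //; exact: le_trans yb (ltW (hb n)).
- by move=> b; exists b.
- move=> K cK; have [c [_ hc]] := bounded_above (ray_nomax hW) cK m.
  by exists c.
Qed.

End RayTight.

Section Line.
Variables (R : realType) (d : Order.disp_t) (W : orderType d).
Local Notation Y := (@LongRay R d W).
Local Notation L := (@LongLine R d W).
Variable m : Y.
Hypothesis hm : forall x : Y, m <= x.

Lemma lr_minE (x : Y) : lr_minimal (x : @LongRay_ord R d W) = (x == m).
Proof.
apply/idP/idP => [/asboolP h|/eqP->]; last by apply/asboolP => y; exact: hm.
by apply/eqP/le_anti; rewrite hm h.
Qed.

Lemma posP (x : Y) : @LL_pred R d W (true, ((m : @LongRay_ord R d W), (x : @LongRay_ord R d W))).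
Proof. by rewrite /LL_pred /= lr_minE. Qed.

Definition pos (x : Y) : L := @exist _ (fun p => is_true (@LL_pred R d W p)) _ (posP x).
Definition neg (x : Y) : L :=
  insubd (pos m) (false, ((x : @LongRay_ord R d W), (m : @LongRay_ord R d W))).

Lemma val_neg (x : Y) : x != m -> val (neg x) = (false, ((x : @LongRay_ord R d W), (m : @LongRay_ord R d W))).
Proof. by move=> xm; rewrite /neg val_insubd /LL_pred /= !lr_minE eqxx xm. Qed.

Lemma neg_m : neg m = pos m.
Proof. by apply: val_inj; rewrite /neg val_insubd /LL_pred /= !lr_minE eqxx. Qed.

Lemma line_cases (p : L) : (exists x, p = pos x) \/ (exists x, x != m /\ p = neg x).
Proof.
case: p => -[[] [y1 y2]] h.
- left; exists y2; apply: val_inj => /=; have h' := h; rewrite /LL_pred /= lr_minE in h'.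
  by move/eqP: h' => ->.
- right; exists y1; have h' := h; rewrite /LL_pred /= !lr_minE in h'.
  case/andP: h' => /eqP e y1m.
  by split => //; apply: val_inj; rewrite val_neg //= e.
Qed.

Lemma le_pos (x y : Y) : (pos x <= pos y) = (x <= y).
Proof. by rewrite leEsub /= !lexi_pair /= leEdual lexx /=. Qed.

Lemma le_neg' (x y : Y) : x != m -> y != m -> (neg x <= neg y) = (y <= x).
Proof. by move=> xm ym; rewrite leEsub /= !val_neg //= !lexi_pair /= !leEdual lexx /= implybT andbT. Qed.

Lemma le_negpos' (x y : Y) : x != m -> (neg x <= pos y).
Proof. by move=> xm; rewrite leEsub /= !val_neg //= !lexi_pair /=. Qed.

Lemma le_posneg' (x y : Y) : y != m -> (pos x <= neg y) = false.
Proof. by move=> ym; rewrite leEsub /= !val_neg //= !lexi_pair /=. Qed.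

Lemma eq_m (x : Y) : (x <= m) = (x == m).
Proof. by apply/idP/eqP => [h|->//]; apply/le_anti; rewrite h hm. Qed.

Lemma le_neg (x y : Y) : (neg x <= neg y) = (y <= x).
Proof.
have [->|xm] := eqVneq x m; have [->|ym] := eqVneq y m; rewrite ?lexx //.
- by rewrite neg_m le_posneg' // eq_m (negbTE ym).
- by rewrite neg_m le_negpos' // hm.
- exact: le_neg'.
Qed.

Lemma le_negpos (x y : Y) : neg x <= pos y.
Proof. by have [->|xm] := eqVneq x m; [rewrite neg_m le_pos hm|exact: le_negpos']. Qed.

Lemma le_posneg (x y : Y) : (pos x <= neg y) = (x == m) && (y == m).
Proof.
have [->|ym] := eqVneq y m; last by rewrite le_posneg' // andbF.
by rewrite neg_m le_pos eq_m andbT.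
Qed.

Lemma lt_pos (x y : Y) : (pos x < pos y) = (x < y).
Proof. by rewrite !ltNge le_pos. Qed.

Lemma lt_neg (x y : Y) : (neg x < neg y) = (y < x).
Proof. by rewrite !ltNge le_neg. Qed.

Lemma lt_negpos (x y : Y) : (neg x < pos y) = ~~ ((x == m) && (y == m)).
Proof. by rewrite ltNge le_posneg andbC. Qed.

Lemma lt_posneg (x y : Y) : (pos x < neg y) = false.
Proof. by rewrite ltNge le_negpos. Qed.

Definition abs (p : L) : Y := if (val p).1 then (val p).2.2 else (val p).2.1.

Lemma abs_pos x : abs (pos x) = x. Proof. by []. Qed.

Lemma abs_neg x : abs (neg x) = x.
Proof.
have [->|xm] := eqVneq x m; first by rewrite neg_m.
by rewrite /abs val_neg.
Qed.

End Line.

Section LineProps.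
Variables (R : realType) (d : Order.disp_t) (W : orderType d).
Hypothesis hW : is_omega1 W.
Local Notation Y := (@LongRay R d W).
Local Notation L := (@LongLine R d W).
Variable m : Y.
Hypothesis hm : forall x : Y, m <= x.
Local Notation pos := (pos hm).
Local Notation neg := (neg hm).
Local Notation abs := (@abs R d W).

Lemma Drat_min : Drat m.
Proof.
suff e : m.2 = (zero01 R) by exists 0%Q; rewrite e /= rmorph0.
have : m <= ((m.1, zero01 R) : Y) by exact: hm.
rewrite ray_le_same // le01 /= => h; apply/val_inj/le_anti; rewrite h /=.
exact: I01_ge0.
Qed.

Lemma mltx (x : Y) : x != m -> m < x.
Proof. by move=> xm; rewrite lt_neqAle eq_sym xm hm. Qed.

Lemma line_dense_rat (u z : L) : u < z -> exists c, Drat (abs c) /\ u < c < z.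
Proof.
case: (line_cases hm u) => [[x ->]|[x [xm ->]]]; case: (line_cases hm z) => [[y ->]|[y [ym ->]]].
- rewrite lt_pos => /ray_dense_rat[c [Dc /andP[xc cy]]].
  by exists (pos c); rewrite abs_pos lt_pos xc lt_pos cy.
- by rewrite lt_posneg.
- move=> _; have [c [Dc /andP[mc cx]]] := ray_dense_rat (mltx xm).
  exists (neg c); rewrite abs_neg lt_neg cx lt_negpos; split => //.
  by rewrite (gt_eqF mc).
- rewrite lt_neg => /ray_dense_rat[c [Dc /andP[yc cx]]].
  by exists (neg c); rewrite abs_neg !lt_neg cx yc.
Qed.

Lemma line_nomax (p : L) : exists q, p < q.
Proof.
case: (line_cases hm p) => [[x ->]|[x [xm ->]]].
  by have [y xy] := ray_nomax hW x; exists (pos y); rewrite lt_pos.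
by exists (pos m); rewrite lt_negpos (negbTE xm).
Qed.

Lemma line_nomin (p : L) : exists q, q < p.
Proof.
case: (line_cases hm p) => [[x ->]|[x [xm ->]]].
  have [y my] := ray_nomax hW m; exists (neg y); rewrite lt_negpos.
  by rewrite (gt_eqF my).
by have [y xy] := ray_nomax hW x; exists (neg y); rewrite lt_neg.
Qed.

Lemma Rb_iff (b : Y) (p : L) : (abs p < b) = (neg b < p) && (p < pos b).
Proof.
case: (line_cases hm p) => [[x ->]|[x [xm ->]]].
  rewrite abs_pos lt_negpos lt_pos; case: (ltP x b) => h; rewrite ?andbF //.
  rewrite andbT; apply/esym/negP => /andP[/eqP bm _]; move: h; rewrite bm.
  by rewrite ltNge hm.
by rewrite abs_neg lt_neg lt_negpos (negbTE xm) /= andbT.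
Qed.

Lemma le_pos_abs (p : L) : p <= pos (abs p).
Proof.
case: (line_cases hm p) => [[x ->]|[x [xm ->]]]; first by rewrite abs_pos.
exact: le_negpos.
Qed.

Lemma neg_abs_le (p : L) : neg (abs p) <= p.
Proof.
case: (line_cases hm p) => [[x ->]|[x [xm ->]]]; last by rewrite abs_neg.
exact: le_negpos.
Qed.

Lemma line_countD (b : Y) : countable [set p : L | abs p <= b /\ Drat (abs p)].
Proof.
pose Dr := [set y : Y | y <= b /\ Drat y].
apply: (@sub_countable _ _ _ (\bigcup_(i in [set: bool]) (if i then pos @` Dr else neg @` Dr))).
  apply: subset_card_le => p [pb Dp].
  case: (line_cases hm p) => [[x ex]|[x [xm ex]]]; rewrite ex in pb Dp *.
    by exists true => //=; exists x => //; rewrite abs_pos in pb Dp.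
  by exists false => //=; exists x => //; rewrite abs_neg in pb Dp.
apply: bigcup_countable => // -[] _;
  apply: card_le_trans (card_image_le _ _) _; exact: ray_countD hW b.
Qed.

Lemma line_sup (S : set L) : S !=set0 -> (exists B, forall s, S s -> s <= B) ->
  exists u, (forall s, S s -> s <= u) /\ (forall v, (forall s, S s -> s <= v) -> u <= v).
Proof.
move=> [s0 Ss0] [B hB].
have [[x0 Sx0]|nP] := pselect (exists x, S (pos x)).
  have Tne : [set x | S (pos x)] !=set0 by exists x0.
  have Tb : exists B', forall x, [set x | S (pos x)] x -> x <= B'.
    exists (abs B) => x Sx; rewrite -(le_pos hm).
    exact: le_trans (hB _ Sx) (le_pos_abs B).
  have [t [ubt leastt]] := ray_sup hW Tne Tb.
  exists (pos t); split.
    move=> s Ss; case: (line_cases hm s) => [[x ex]|[x [xm ex]]]; rewrite ex.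
      by rewrite le_pos; apply: ubt; rewrite /= -ex.
    exact: le_negpos.
  move=> v hv; case: (line_cases hm v) => [[y ev]|[y [ym ev]]]; rewrite ev in hv *;
    have := hv _ Sx0; last first.
    by rewrite le_posneg (negbTE ym) andbF.
  move=> _; rewrite le_pos; apply: leastt => x Sx.
  by rewrite -(le_pos hm); exact: hv.
have Sneg s : S s -> exists x, s = neg x.
  move=> Ss; case: (line_cases hm s) => [[x ex]|[x [xm ex]]]; last by exists x.
  by exfalso; apply: nP; exists x; rewrite -ex.
have [x1 ex1] := Sneg _ Ss0.
pose T := [set x | S (neg x)].
pose Lx := [set y | forall x, T x -> y <= x].
have Lne : Lx !=set0 by exists m => x _; exact: hm.
have Lb : exists B', forall y, Lx y -> y <= B'.
  by exists x1 => y Ly; apply: Ly; move: Ss0; rewrite ex1.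
have [i [ubi leasti]] := ray_sup hW Lne Lb.
have iT x : T x -> i <= x by move=> Tx; apply: leasti => y Ly; exact: Ly x Tx.
exists (neg i); split.
  move=> s Ss; have [x ex] := Sneg _ Ss; rewrite ex le_neg; apply: iT.
  by move: Ss; rewrite ex.
move=> v hv; case: (line_cases hm v) => [[y ev]|[y [ym ev]]]; rewrite ev in hv *;
  first exact: le_negpos.
rewrite le_neg; apply: ubi => x Tx; rewrite -(le_neg hm); exact: hv.
Qed.

End LineProps.

Section LineTight.
Variables (R : realType) (d : Order.disp_t) (W : orderType d).
Hypothesis hW : is_omega1 W.
Local Notation Y := (@LongRay R d W).
Local Notation L := (@LongLine R d W).

Theorem line_tight : countably_tight_subspace (@Homeo_cpt L).
Proof.
have [m hm] := ray_min R hW.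
have Rb := Rb_iff hm.
have ldense (x y : L) : x < y -> exists z, x < z < y.
  by move=> /(line_dense_rat hm)[c [_ h]]; exists c.
apply: (@tight_of_order _ L ldense (line_sup hW hm) (line_nomax hW hm) Y
   (fun b => [set p | abs p < b]) (fun b => [set p | abs p <= b /\ Drat (abs p)])).
- move=> b u z uz /=; rewrite Rb => /andP[bz zb].
  have umax : Order.max u (neg hm b) < z by rewrite gt_max uz bz.
  have [c [Dc /andP[uc cz]]] := line_dense_rat hm umax.
  move: uc; rewrite gt_max => /andP[uc bc].
  exists c; split; last by rewrite uc cz.
  by split => //; apply: ltW; rewrite Rb bc (lt_trans cz zb).
- move=> b u z uz /=; rewrite Rb => /andP[bu ub].
  have umin : u < Order.min z (pos hm b) by rewrite lt_min uz ub.
  have [c [Dc /andP[uc]]] := line_dense_rat hm umin; rewrite lt_min => /andP[cz cb].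
  exists c; split; last by rewrite uc cz.
  by split => //; apply: ltW; rewrite Rb cb (lt_trans bu uc).
- move=> b x _; left; have [q hq] := line_nomin hW hm x; exists q; exact: hq.
- move=> b; split; first exact (line_countD hW hm b).
  exists (pos hm m); rewrite /= abs_pos; split; [exact: hm|exact: Drat_min hm].
- move=> beta; have [b hb] := ray_bound hW beta; exists b => n; split.
    by move=> p /= pb; exact: lt_trans pb (hb n).
  by move=> p /= [pb Dp]; split => //; exact: le_trans pb (ltW (hb n)).
- by move=> b; exists (pos hm b) => p /=; rewrite Rb => /andP[].
- move=> K cK.
  have [c1 [_ h1]] := bounded_above (line_nomax hW hm) cK (pos hm m).
  have [c2 [_ h2]] := bounded_below (line_nomin hW hm) cK (pos hm m).
  exists (Order.max (abs c1) (abs c2)) => p Kp /=; rewrite Rb.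
  apply/andP; split.
    apply: le_lt_trans (h2 p Kp); apply: le_trans (neg_abs_le hm c2).
    by rewrite le_neg le_max lexx orbT.
  apply: lt_le_trans (h1 p Kp) _; apply: le_trans (le_pos_abs hm c1) _.
  by rewrite le_pos le_max lexx.
Qed.

End LineTight.


Theorem proposition5p1 (R : realType) (d : Order.disp_t) (W : orderType d) :
  is_omega1 W ->
  countably_tight_subspace (@Homeo_cpt (@LongRay R d W)) /\
  countably_tight_subspace (@Homeo_cpt (@LongLine R d W)).
Proof. by move=> hW; split; [exact: ray_tight hW | exact: line_tight hW]. Qed.
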